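(* For every $\delta\in[0,1)$ and every $V_{\sf P}>-1$, the limits $\lim_{p\to0}{\sf Eng}({\sf PEAR})$ and $\lim_{p\to0}{\sf Util}({\sf PEAR})$ exist and satisfy $$\lim_{p\to0}{\sf Eng}({\sf PEAR})<{\sf Eng}({\sf APP}),\qquad \lim_{p\to0}{\sf Util}({\sf PEAR})>{\sf Util}({\sf APP}),$$ where ${\sf Eng}({\sf APP})=\frac{1}{1-\delta}\frac{2e^{V_{\sf P}}}{1+2e^{V_{\sf P}}}$ and ${\sf Util}({\sf APP})=\frac{1}{1-\delta}\ln(1+2e^{V_{\sf P}})$ do not depend on $p$.
   Context: Model. Time $t=0,1,2,\dots$, discount factor $\delta\in[0,1)$. Two item types, popular ${\sf P}$ and niche ${\sf N}$, infinitely many items each; at each time $t$ the platform recommends a set $\pi_t$ of two fresh items of chosen types. Utility of item $i$: $u_i=V_{\tau(i)}+\epsilon_i$; outside option: $u_\emptyset=\epsilon_\emptyset$; all noises i.i.d. Gumbel with scale $1$ and mean $0$. User chooses $c_t=\arg\max_{j\in\pi_t\cup\{\emptyset\}}u_j$. $V_{\sf P}$ is a known constant; $V_{\sf N}$ is drawn once, fixed over time, independent of noise, with $\mathbb P(V_{\sf N}=(1-p)/p)=p$, $\mathbb P(V_{\sf N}=-1)=1-p$, $p\in(0,1)$. ${\sf Eng}(\pi)=\sum_{t\ge0}\delta^t\mathbb P(c_t\ne\emptyset)$, ${\sf Util}(\pi)=\sum_{t\ge0}\delta^t\mathbb E[\max_{j\in\pi_t\cup\{\emptyset\}}u_j]$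 (expectations also over $V_{\sf N}$). ${\sf APP}$ recommends two popular items at every time. Policy ${\sf PEAR}$: let $\rho_1=\frac{e^{(1-p)/p}}{1+e^{V_{\sf P}}+e^{(1-p)/p}}$, $\rho_2=\frac{e^{-1}}{1+e^{V_{\sf P}}+e^{-1}}$. Maintain counters $S,F$ (initially $0$) and $p_0=p$. At each time $t$: if $p_t\ge p$, recommend one popular and one niche item; if the niche item is chosen increment $S$, otherwise increment $F$. If $p_t<p$, recommend two popular items. Then set $p_{t+1}=\left(1+\frac{1-p}{p}\cdot\frac{\rho_2^S(1-\rho_2)^F}{\rho_1^S(1-\rho_1)^F}\right)^{-1}$. *)

(* Defs.v *)
From Stdlib Require Import Reals Lra Lia.
From Coquelicot Require Import Coquelicot.
Open Scope R_scope.

(* Gumbel(scale 1, mean 0) noise => multinomial-logit choice and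
   E[max utility] = ln(1 + sum_j e^{V_j}) (outside option has V = 0).   *)

(* probability that the niche item is chosen from the menu {P, N},
   when V_N = v *)
Definition qN (VP v : R) : R := exp v / (1 + exp VP + exp v).

Definition rho1 (VP p : R) : R :=
  exp ((1 - p) / p) / (1 + exp VP + exp ((1 - p) / p)).
Definition rho2 (VP : R) : R := exp (-1) / (1 + exp VP + exp (-1)).

(* PEAR's belief p_t as a function of the counters (S,F); p_0 = post 0 0 = p *)
Definition post (VP p : R) (s f : nat) : R :=
  / (1 + (1 - p) / p *
         ((rho2 VP ^ s * (1 - rho2 VP) ^ f) /
          (rho1 VP p ^ s * (1 - rho1 VP p) ^ f))).

(* PEAR explores (recommends one popular and one niche item) iff p_t >= p *)
Definition explore (VP p : R) (s f : nat) : bool :=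
  if Rle_dec p (post VP p s f) then true else false.

(* dist VP p v t s f = P(counters at time t equal (s,f) | V_N = v) *)
Fixpoint dist (VP p v : R) (t : nat) : nat -> nat -> R :=
  match t with
  | O => fun s f => match s, f with O, O => 1 | _, _ => 0 end
  | S t' => fun s f =>
      (if explore VP p s f then 0 else dist VP p v t' s f)
      + match s with
        | O => 0
        | S s' => if explore VP p s' f then dist VP p v t' s' f * qN VP v else 0
        end
      + match f with
        | O => 0
        | S f' => if explore VP p s f' then dist VP p v t' s f' * (1 - qN VP v) else 0
        end
  end.

(* one-step engagement P(c_t <> empty) and expected utility E[max u]
   for each menu, when V_N = v *)
Definition engExplore (VP v : R) : R := (exp VP + exp v) / (1 + exp VP + exp v).
Definition engApp (VP : R) : R := 2 * exp VP / (1 + 2 * exp VP).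
Definition utilExplore (VP v : R) : R := ln (1 + exp VP + exp v).
Definition utilApp (VP : R) : R := ln (1 + 2 * exp VP).

(* expected value at time t of a per-step quantity, given V_N = v
   (the counters satisfy s + f <= t, so s, f <= t covers the support) *)
Definition stepExp (VP p v : R) (gE : R) (gA : R) (t : nat) : R :=
  sum_f_R0 (fun s => sum_f_R0 (fun f =>
     dist VP p v t s f * (if explore VP p s f then gE else gA)) t) t.

(* V_N = (1-p)/p with probability p, V_N = -1 with probability 1-p *)
Definition EngPEAR (delta VP p : R) : R :=
  Series (fun t => delta ^ t *
    (p * stepExp VP p ((1 - p) / p) (engExplore VP ((1 - p) / p)) (engApp VP) t
     + (1 - p) * stepExp VP p (-1) (engExplore VP (-1)) (engApp VP) t)).

Definition UtilPEAR (delta VP p : R) : R :=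
  Series (fun t => delta ^ t *
    (p * stepExp VP p ((1 - p) / p) (utilExplore VP ((1 - p) / p)) (utilApp VP) t
     + (1 - p) * stepExp VP p (-1) (utilExplore VP (-1)) (utilApp VP) t)).

Definition EngAPP (delta VP : R) : R := Series (fun t => delta ^ t * engApp VP).
Definition UtilAPP (delta VP : R) : R := Series (fun t => delta ^ t * utilApp VP).

(* Main.v *)
Require Import Defs.
From Stdlib Require Import Reals.
From Coquelicot Require Import Coquelicot.
Open Scope R_scope.
From Stdlib Require Import Lra Lia.
(* re-import Defs so that Defs.dist shadows Stdlib's metric-space dist *)
Require Import Defs.

Definition W (n : nat) (g : nat -> nat -> R) : R :=
  sum_f_R0 (fun s => sum_f_R0 (fun f => g s f) n) n.

Lemma sum_zero (F : nat -> R) n : (forall i, (i <= n)%nat -> F i = 0) -> sum_f_R0 F n = 0.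
Proof. intros H. rewrite (sum_eq F (fun _ => 0)) by auto. rewrite sum_cte. ring. Qed.

Lemma W_ext n g1 g2 : (forall s f, g1 s f = g2 s f) -> W n g1 = W n g2.
Proof. intros H. unfold W. apply sum_eq; intros. apply sum_eq; intros. auto. Qed.

Lemma W_plus n g1 g2 : W n (fun s f => g1 s f + g2 s f) = W n g1 + W n g2.
Proof. unfold W. rewrite <- sum_plus. apply sum_eq; intros. apply sum_plus. Qed.

Lemma W_le n g1 g2 : (forall s f, g1 s f <= g2 s f) -> W n g1 <= W n g2.
Proof. intros H. unfold W. apply sum_Rle; intros. apply sum_Rle; intros. auto. Qed.

Lemma W_scal n K g : W n (fun s f => g s f * K) = K * W n g.
Proof. unfold W. rewrite (scal_sum _ n K). apply sum_eq; intros. rewrite Rmult_comm, (scal_sum _ n K). reflexivity. Qed.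

Lemma W_S_supp n g : (forall s f, (n < s + f)%nat -> g s f = 0) -> W (S n) g = W n g.
Proof.
  intros H. unfold W. simpl.
  rewrite sum_plus.
  rewrite (sum_zero (fun i => g i (S n))) by (intros; apply H; lia).
  rewrite (sum_zero (fun f => g (S n) f)) by (intros; apply H; lia).
  rewrite H by lia. ring.
Qed.

Lemma W_shiftS n h : (forall s f, (n < s + f)%nat -> h s f = 0) ->
  W (S n) (fun s f => match s with O => 0 | S s' => h s' f end) = W n h.
Proof.
  intros H. unfold W. rewrite decomp_sum by lia. simpl Init.Nat.pred.
  rewrite (sum_zero (fun f => 0)) by auto.
  rewrite Rplus_0_l. apply sum_eq; intros i Hi. simpl.
  rewrite H by lia. ring.
Qed.

Lemma W_shiftF n h : (forall s f, (n < s + f)%nat -> h s f = 0) ->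
  W (S n) (fun s f => match f with O => 0 | S f' => h s f' end) = W n h.
Proof.
  intros H. unfold W.
  rewrite (sum_eq _ (fun s => sum_f_R0 (fun f => h s f) n)).
  2:{ intros i Hi. rewrite decomp_sum by lia. simpl Init.Nat.pred. ring. }
  simpl. rewrite (sum_zero (fun f => h (S n) f)) by (intros; apply H; lia). ring.
Qed.

Section D.
Variables VP p v : R.

Lemma dist_supp t : forall s f, (t < s + f)%nat -> dist VP p v t s f = 0.
Proof.
  induction t as [|t IH]; intros s f H.
  - destruct s; destruct f; simpl; try reflexivity; lia.
  - simpl.
    assert (A : (if explore VP p s f then 0 else dist VP p v t s f) = 0)
      by (destruct explore; [reflexivity| apply IH; lia]).
    assert (B : match s with O => 0 | S s' => if explore VP p s' f then dist VP p v t s' f * qN VP v else 0 end = 0).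
    { destruct s as [|s]; [reflexivity|]. destruct (explore VP p s f); [(rewrite IH by lia); ring| reflexivity]. }
    assert (C : match f with O => 0 | S f' => if explore VP p s f' then dist VP p v t s f' * (1 - qN VP v) else 0 end = 0).
    { destruct f as [|f]; [reflexivity|]. destruct (explore VP p s f); [(rewrite IH by lia); ring| reflexivity]. }
    rewrite A, B, C. ring.
Qed.

Lemma dist_mass t : W t (dist VP p v t) = 1.
Proof.
  induction t as [|t IH].
  - unfold W. simpl. reflexivity.
  - set (d := dist VP p v t). set (q := qN VP v).
    rewrite (W_ext _ _ (fun s f =>
       ((if explore VP p s f then 0 else d s f)
       + match s with O => 0 | S s' => (fun s f => if explore VP p s f then d s f * q else 0) s' f end)
       + match f with O => 0 | S f' => (fun s f => if explore VP p s f then d s f * (1 - q) else 0) s f' end))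
      by (intros; reflexivity).
    rewrite !W_plus.
    rewrite W_S_supp.
    2:{ intros s f H. destruct (explore VP p s f); [reflexivity|]. apply dist_supp; lia. }
    rewrite W_shiftS.
    2:{ intros s f H. destruct (explore VP p s f); [|reflexivity]. unfold d. (rewrite dist_supp by lia). ring. }
    rewrite W_shiftF.
    2:{ intros s f H. destruct (explore VP p s f); [|reflexivity]. unfold d. (rewrite dist_supp by lia). ring. }
    rewrite <- !W_plus. transitivity (W t d); [|exact IH]. apply W_ext. intros s f. cbv beta. destruct (explore VP p s f); ring.
Qed.

Lemma qN_bounds : 0 < qN VP v < 1.
Proof.
  unfold qN. pose proof (exp_pos VP). pose proof (exp_pos v).
  split. apply Rdiv_lt_0_compat; lra.
  apply (Rmult_lt_reg_r (1 + exp VP + exp v)); [lra|].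
  unfold Rdiv. rewrite Rmult_assoc, Rinv_l by lra. lra.
Qed.

Lemma dist_nonneg t : forall s f, 0 <= dist VP p v t s f.
Proof.
  pose proof qN_bounds.
  induction t as [|t IH]; intros s f.
  - destruct s; destruct f; simpl; lra.
  - simpl. repeat apply Rplus_le_le_0_compat.
    + destruct explore; [lra| apply IH].
    + destruct s; [lra|]. destruct explore; [|lra]. apply Rmult_le_pos; [apply IH| lra].
    + destruct f; [lra|]. destruct explore; [|lra]. apply Rmult_le_pos; [apply IH| lra].
Qed.

Lemma stepExp_bounds gE gA K t : 0 <= gE <= K -> 0 <= gA <= K ->
  0 <= stepExp VP p v gE gA t <= K.
Proof.
  intros HE HA. unfold stepExp. fold (W t (fun s f => dist VP p v t s f * (if explore VP p s f then gE else gA))).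
  split.
  - apply Rle_trans with (W t (fun s f => 0)).
    + unfold W. rewrite sum_zero. lra. intros; apply sum_zero; auto.
    + apply W_le; intros. apply Rmult_le_pos. apply dist_nonneg. destruct explore; lra.
  - apply Rle_trans with (W t (fun s f => dist VP p v t s f * K)).
    + apply W_le; intros. apply Rmult_le_compat_l. apply dist_nonneg. destruct explore; lra.
    + rewrite W_scal. rewrite dist_mass. lra.
Qed.
End D.


Definition Dq (q : R) (t s f : nat) : R :=
  match f with
  | O => if Nat.eqb s t then q ^ t else 0
  | S O => if Nat.ltb s t then q ^ s * (1 - q) else 0
  | _ => 0
  end.

Section F.
Variables VP p v : R.
Variable T : nat.
Hypothesis H0 : forall s, explore VP p s 0 = true.
Hypothesis H1 : forall s, (s < T)%nat -> explore VP p s 1 = false.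

Lemma dist_formula t : (t <= T)%nat -> forall s f, dist VP p v t s f = Dq (qN VP v) t s f.
Proof.
  set (q := qN VP v).
  induction t as [|t IH]; intros Ht s f.
  - destruct s as [|s]; destruct f as [|[|f]]; simpl; reflexivity.
  - assert (IH' : forall s f, dist VP p v t s f = Dq q t s f) by (apply IH; lia).
    destruct s as [|s]; destruct f as [|[|f]]; simpl; rewrite ?IH'; rewrite ?H0; fold q.
    all: unfold Dq; simpl;
      repeat match goal with
      | |- context [Nat.ltb ?a ?b] => destruct (Nat.ltb_spec a b)
      | |- context [Nat.eqb ?a ?b] => destruct (Nat.eqb_spec a b)
      | |- context [match ?x with O => _ | S _ => _ end] => is_var x; destruct x
      end; simpl; try lia; try subst;
      repeat match goal with
      | |- context [explore VP p ?a 1] => rewrite (H1 a) by lia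
      end;
      repeat match goal with
      | |- context [explore VP p ?a ?b] => destruct (explore VP p a b)
      end; simpl; try ring.
Qed.

Lemma sum_two (F : nat -> R) n : (1 <= n)%nat -> (forall i, (2 <= i)%nat -> F i = 0) ->
  sum_f_R0 F n = F 0%nat + F 1%nat.
Proof.
  intros Hn HF. induction n as [|n IHn]; [lia|].
  destruct n as [|n]; [simpl; ring|].
  change (sum_f_R0 F (S (S n))) with (sum_f_R0 F (S n) + F (S (S n))). rewrite IHn by lia. rewrite (HF (S (S n))) by lia. ring.
Qed.

Lemma geom_part (q : R) n : sum_f_R0 (fun s => q ^ s * (1 - q)) n = 1 - q ^ (S n).
Proof. induction n as [|n IHn]; simpl. ring. simpl in IHn. rewrite IHn. ring. Qed.

Lemma stepExp_formula gE gA t : (t <= T)%nat ->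
  stepExp VP p v gE gA t = (qN VP v) ^ t * gE + (1 - (qN VP v) ^ t) * gA.
Proof.
  intros Ht. set (q := qN VP v). unfold stepExp.
  rewrite (sum_eq _ (fun s => sum_f_R0 (fun f => Dq q t s f * (if explore VP p s f then gE else gA)) t)).
  2:{ intros i _. apply sum_eq. intros j _. rewrite dist_formula by lia. reflexivity. }
  destruct t as [|t].
  - simpl. rewrite H0. ring.
  - rewrite (sum_eq _ (fun s => (if Nat.eqb s (S t) then q ^ (S t) * gE else 0) +
                                 (if Nat.ltb s (S t) then q ^ s * (1 - q) * gA else 0))).
    2:{ intros i Hi. rewrite sum_two by (try lia; intros j Hj; destruct j as [|[|j]]; try lia; simpl; ring).
        rewrite H0. unfold Dq.
        destruct (Nat.ltb_spec i (S t)).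
        - rewrite H1 by lia. destruct (Nat.eqb i (S t)); ring.
        - destruct (Nat.eqb i (S t)); destruct (explore VP p i 1); ring. }
    simpl sum_f_R0 at 1.
    rewrite (sum_eq _ (fun s => q ^ s * (1 - q) * gA)).
    2:{ intros i Hi. destruct (Nat.eqb_spec i (S t)); [lia|]. destruct (Nat.ltb_spec i (S t)); [|lia]. ring. }
    rewrite Nat.eqb_refl. destruct (Nat.ltb_spec (S t) (S t)); [lia|].
    rewrite <- (scal_sum (fun s => q ^ s * (1 - q)) t gA) .
    rewrite geom_part. simpl. ring.
Qed.
End F.


Section G.
Variable VP : R.

Lemma rho1_eq p : rho1 VP p = qN VP ((1 - p) / p).
Proof. reflexivity. Qed.
Lemma rho2_eq : rho2 VP = qN VP (-1).
Proof. reflexivity. Qed.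

Lemma rho1_b p : 0 < rho1 VP p < 1.
Proof. apply qN_bounds. Qed.
Lemma rho2_b : 0 < rho2 VP < 1.
Proof. apply qN_bounds. Qed.

Lemma rho2_le_rho1 p : 0 < p < 1 -> rho2 VP <= rho1 VP p.
Proof.
  intros Hp. unfold rho1, rho2.
  assert (Hx : -1 < (1 - p) / p).
  { apply Rlt_le_trans with 0. lra. apply Rdiv_le_0_compat; lra. }
  pose proof (exp_increasing _ _ Hx) as He.
  set (a := exp (-1)) in *. set (b := exp ((1 - p) / p)) in *.
  pose proof (exp_pos VP). assert (0 < a) by apply exp_pos.
  unfold Rdiv. apply Rmult_le_reg_r with ((1 + exp VP + a) * (1 + exp VP + b)).
  apply Rmult_lt_0_compat; lra.
  replace (a * / (1 + exp VP + a) * ((1 + exp VP + a) * (1 + exp VP + b))) with (a * (1 + exp VP + b)) by (field; lra).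
  replace (b * / (1 + exp VP + b) * ((1 + exp VP + a) * (1 + exp VP + b))) with (b * (1 + exp VP + a)) by (field; lra).
  nra.
Qed.

Lemma one_m_rho1 p : 0 < p < 1 -> 1 - rho1 VP p <= (1 + exp VP) * p.
Proof.
  intros Hp. unfold rho1.
  pose proof (exp_ineq1_le ((1 - p) / p)) as He. pose proof (exp_pos ((1 - p) / p)).
  set (b := exp ((1 - p) / p)) in *. pose proof (exp_pos VP).
  assert (Hb : 1 <= p * b).
  { replace 1 with (p * (1 + (1 - p) / p)) by (field; lra). apply Rmult_le_compat_l; lra. }
  replace (1 - b / (1 + exp VP + b)) with ((1 + exp VP) / (1 + exp VP + b)) by (field; lra).
  unfold Rdiv. apply Rmult_le_reg_r with (1 + exp VP + b). lra.
  rewrite Rmult_assoc, Rinv_l by lra. nra.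
Qed.

Definition ratio p s f := (rho2 VP ^ s * (1 - rho2 VP) ^ f) / (rho1 VP p ^ s * (1 - rho1 VP p) ^ f).

Lemma ratio_pos p s f : 0 < ratio p s f.
Proof.
  pose proof (rho1_b p). pose proof rho2_b. unfold ratio.
  apply Rdiv_lt_0_compat; apply Rmult_lt_0_compat; apply pow_lt; lra.
Qed.

Lemma explore_true p s f : 0 < p < 1 -> ratio p s f <= 1 -> explore VP p s f = true.
Proof.
  intros Hp Hr. pose proof (ratio_pos p s f).
  unfold explore, post. fold (ratio p s f). set (r := ratio p s f) in *.
  destruct (Rle_dec p (/ (1 + (1 - p) / p * r))) as [|n]; [reflexivity|].
  exfalso; apply n.
  assert (Hk : 0 <= (1 - p) / p * r) by (apply Rmult_le_pos; [apply Rdiv_le_0_compat|]; lra).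
  apply Rmult_le_reg_r with (1 + (1 - p) / p * r). lra.
  rewrite Rinv_l by lra.
  replace (p * (1 + (1 - p) / p * r)) with (p + (1 - p) * r) by (field; lra). nra.
Qed.

Lemma explore_false p s f : 0 < p < 1 -> 1 < ratio p s f -> explore VP p s f = false.
Proof.
  intros Hp Hr.
  unfold explore, post. fold (ratio p s f). set (r := ratio p s f) in *.
  destruct (Rle_dec p (/ (1 + (1 - p) / p * r))) as [H|]; [|reflexivity].
  exfalso.
  assert (Hk : 0 <= (1 - p) / p * r) by (apply Rmult_le_pos; [apply Rdiv_le_0_compat|]; lra).
  apply Rmult_le_compat_r with (r := 1 + (1 - p) / p * r) in H; [|lra].
  rewrite Rinv_l in H by lra.
  replace (p * (1 + (1 - p) / p * r)) with (p + (1 - p) * r) in H by (field; lra). nra.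
Qed.

Lemma good0 p : 0 < p < 1 -> forall s, explore VP p s 0 = true.
Proof.
  intros Hp s. apply explore_true; auto. unfold ratio. simpl.
  pose proof (rho1_b p). pose proof rho2_b. pose proof (rho2_le_rho1 p Hp).
  assert (A : rho2 VP ^ s <= rho1 VP p ^ s) by (apply pow_incr; lra).
  assert (B : 0 < rho1 VP p ^ s) by (apply pow_lt; lra).
  rewrite !Rmult_1_r. unfold Rdiv. apply Rmult_le_reg_r with (rho1 VP p ^ s). lra.
  rewrite Rmult_assoc, Rinv_l by lra. lra.
Qed.

Lemma pow_le_mono (x : R) (s T : nat) : 0 <= x <= 1 -> (s <= T)%nat -> x ^ T <= x ^ s.
Proof.
  intros Hx HsT. replace T with (s + (T - s))%nat by lia. rewrite pow_add.
  assert (0 <= x ^ s) by (apply pow_le; lra).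
  assert (x ^ (T - s) <= 1). { rewrite <- (pow1 (T - s)). apply pow_incr. lra. }
  assert (0 <= x ^ (T - s)) by (apply pow_le; lra). nra.
Qed.

Lemma good1 p T : 0 < p < 1 -> (1 + exp VP) * p < rho2 VP ^ T * (1 - rho2 VP) ->
  forall s, (s < T)%nat -> explore VP p s 1 = false.
Proof.
  intros Hp HpT s Hs. apply explore_false; auto. unfold ratio. simpl.
  pose proof (rho1_b p). pose proof rho2_b. pose proof (one_m_rho1 p Hp).
  assert (A : rho2 VP ^ T <= rho2 VP ^ s) by (apply pow_le_mono; [lra|lia]).
  assert (B : 0 < rho1 VP p ^ s) by (apply pow_lt; lra).
  assert (C : rho1 VP p ^ s <= 1) by (rewrite <- (pow1 s); apply pow_incr; lra).
  rewrite !Rmult_1_r. unfold Rdiv.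
  apply Rmult_lt_reg_r with (rho1 VP p ^ s * (1 - rho1 VP p)). apply Rmult_lt_0_compat; lra.
  rewrite Rmult_assoc, Rinv_l by (apply Rgt_not_eq, Rmult_lt_0_compat; lra).
  assert (0 <= 1 - rho2 VP) by lra.
  assert (rho2 VP ^ T * (1 - rho2 VP) <= rho2 VP ^ s * (1 - rho2 VP)) by nra.
  nra.
Qed.
End G.


Lemma ball_R x y (e : posreal) : Rabs (y - x) < e -> ball x e y.
Proof. intros H. exact H. Qed.
Lemma ball_R' x y (e : posreal) : ball x e y -> Rabs (y - x) < e.
Proof. intros H. exact H. Qed.

Lemma geom_ex (M d : R) : 0 <= d < 1 -> ex_series (fun t => M * d ^ t).
Proof.
  intros Hd. exists (M * / (1 - d)).
  apply (is_series_scal_l M (fun t => d ^ t)). apply is_series_geom. rewrite Rabs_pos_eq; lra.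
Qed.

Lemma geom_val (M d : R) : 0 <= d < 1 -> Series (fun t => M * d ^ t) = M * / (1 - d).
Proof.
  intros Hd. apply is_series_unique.
  apply (is_series_scal_l M (fun t => d ^ t)). apply is_series_geom. rewrite Rabs_pos_eq; lra.
Qed.

Lemma ex_dom (c : nat -> R) (M d : R) : 0 <= d < 1 -> (forall t, Rabs (c t) <= M * d ^ t) -> ex_series c.
Proof.
  intros Hd H. apply (ex_series_le c (fun t => M * d ^ t)); [exact H| apply geom_ex; auto].
Qed.

Lemma tail_bound (c : nat -> R) (M d : R) (N : nat) : 0 <= d < 1 ->
  (forall t, Rabs (c t) <= M * d ^ t) ->
  Rabs (Series c) <= sum_f_R0 (fun t => Rabs (c t)) N + M * d ^ (S N) * / (1 - d).
Proof.
  intros Hd H.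
  rewrite (Series_incr_n c (S N)) by (lia || (eapply ex_dom; eauto)).
  simpl Init.Nat.pred.
  eapply Rle_trans. apply Rabs_triang. apply Rplus_le_compat.
  apply sum_f_R0_triangle.
  assert (Ht : forall k, Rabs (c (S N + k)%nat) <= (M * d ^ S N) * d ^ k).
  { intros k. rewrite Rmult_assoc, <- pow_add. apply H. }
  eapply Rle_trans. apply Series_Rabs.
  apply (ex_dom _ (M * d ^ S N) d); auto. intros k; rewrite Rabs_Rabsolu; auto.
  rewrite <- geom_val by auto. apply Series_le. intros k; split; [apply Rabs_pos| apply Ht].
  apply geom_ex; auto.
Qed.

Lemma fin_bound (a : R -> nat -> R) (b : nat -> R) :
  (forall t, exists p1 L, 0 < p1 /\ forall p, 0 < p < p1 -> Rabs (a p t - b t) <= L * p) ->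
  forall N, exists eta L, 0 < eta /\ 0 <= L /\ forall p, 0 < p < eta ->
    sum_f_R0 (fun t => Rabs (a p t - b t)) N <= L * p.
Proof.
  intros H N. induction N as [|N IH].
  - destruct (H 0%nat) as [p1 [L [Hp1 HL]]]. exists p1, (Rabs L). split; auto. split. apply Rabs_pos.
    intros p Hp. simpl. eapply Rle_trans. apply HL; auto. apply Rmult_le_compat_r. lra. apply Rle_abs.
  - destruct IH as [e1 [L1 [He1 [HL1 H1]]]].
    destruct (H (S N)) as [p1 [L [Hp1 HL]]].
    exists (Rmin e1 p1), (L1 + Rabs L). split. apply Rmin_pos; auto. split.
    pose proof (Rabs_pos L); lra.
    intros p Hp. pose proof (Rmin_l e1 p1). pose proof (Rmin_r e1 p1). simpl.
    assert (A := H1 p ltac:(lra)). assert (B := HL p ltac:(lra)).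
    assert (L * p <= Rabs L * p) by (apply Rmult_le_compat_r; [lra| apply Rle_abs]).
    lra.
Qed.

Lemma series_lim (a : R -> nat -> R) (b : nat -> R) (K d p0 : R) :
  0 <= d < 1 -> 0 < p0 ->
  (forall p t, 0 < p < p0 -> Rabs (a p t) <= K * d ^ t) ->
  (forall t, Rabs (b t) <= K * d ^ t) ->
  (forall t, exists p1 L, 0 < p1 /\ forall p, 0 < p < p1 -> Rabs (a p t - b t) <= L * p) ->
  filterlim (fun p => Series (a p)) (at_right 0) (locally (Series b)).
Proof.
  intros Hd Hp0 Ha Hb Hab.
  assert (HK : 0 <= K) by (pose proof (Hb 0%nat); simpl in *; pose proof (Rabs_pos (b 0%nat)); lra).
  apply filterlim_locally. intros eps.
  pose proof (cond_pos eps) as Heps.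
  set (y := eps * (1 - d) / (4 * (2 * K + 1))).
  assert (Hy : 0 < y).
  { unfold y. apply Rdiv_lt_0_compat. apply Rmult_lt_0_compat; lra. lra. }
  destruct (pow_lt_1_zero d ltac:(rewrite Rabs_pos_eq; lra) y Hy) as [N0 HN0].
  destruct (fin_bound a b Hab N0) as [eta [L [Heta [HL HfL]]]].
  set (e2 := Rmin (Rmin eta p0) (eps / (2 * (L + 1)))).
  assert (He2 : 0 < e2).
  { unfold e2. apply Rmin_pos. apply Rmin_pos; auto. apply Rdiv_lt_0_compat; lra. }
  exists (mkposreal e2 He2). intros p Hball Hp.
  apply ball_R' in Hball. simpl in Hball. rewrite Rminus_0_r in Hball.
  rewrite Rabs_pos_eq in Hball by lra.
  pose proof (Rmin_l (Rmin eta p0) (eps / (2 * (L + 1)))).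
  pose proof (Rmin_r (Rmin eta p0) (eps / (2 * (L + 1)))).
  pose proof (Rmin_l eta p0). pose proof (Rmin_r eta p0).
  fold e2 in H, H0.
  apply ball_R.
  assert (Hc : forall t, Rabs (a p t - b t) <= (2 * K) * d ^ t).
  { intros t. eapply Rle_trans. apply Rabs_triang. rewrite Rabs_Ropp.
    pose proof (Ha p t ltac:(lra)). pose proof (Hb t). lra. }
  rewrite <- Series_minus.
  2: apply (ex_dom _ K d); auto; intros; apply Ha; lra.
  2: apply (ex_dom _ K d); auto.
  eapply Rle_lt_trans. apply (tail_bound _ (2 * K) d N0); auto.
  assert (S1 := HfL p ltac:(lra)).
  assert (S2 : L * p <= eps / 2).
  { apply Rle_trans with (L * (eps / (2 * (L + 1)))). apply Rmult_le_compat_l; lra.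
    unfold Rdiv. rewrite Rinv_mult. 
    assert (0 < / (L + 1)) by (apply Rinv_0_lt_compat; lra).
    assert (L * / (L + 1) <= 1).
    { apply Rmult_le_reg_r with (L + 1). lra. rewrite Rmult_assoc, Rinv_l by lra. lra. }
    assert (0 < eps * / 2) by lra.
    replace (L * (eps * (/ 2 * / (L + 1)))) with ((L * / (L + 1)) * (eps * / 2)) by ring.
    replace (eps * / 2) with (1 * (eps * / 2)) at 2 by ring.
    apply Rmult_le_compat_r; lra. }
  assert (S3 : 2 * K * d ^ S N0 * / (1 - d) < eps / 2).
  { assert (Hdn := HN0 (S N0) ltac:(lia)). rewrite Rabs_pos_eq in Hdn by (apply pow_le; lra).
    assert (0 < / (1 - d)) by (apply Rinv_0_lt_compat; lra).
    apply Rle_lt_trans with (2 * K * y * / (1 - d)).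
    apply Rmult_le_compat_r. lra. apply Rmult_le_compat_l; lra.
    unfold y. unfold Rdiv.
    replace (2 * K * (eps * (1 - d) * / (4 * (2 * K + 1))) * / (1 - d)) with
      (eps * (2 * K * / (4 * (2 * K + 1)))) by (field; lra).
    assert (2 * K * / (4 * (2 * K + 1)) < / 2).
    { apply Rmult_lt_reg_r with (4 * (2 * K + 1)). lra. rewrite Rmult_assoc, Rinv_l by lra. lra. }
    nra. }
  lra.
Qed.


Lemma bernoulli (y : R) t : 0 <= y <= 1 -> 1 - INR t * y <= (1 - y) ^ t.
Proof.
  intros Hy. induction t as [|t IH]. simpl. lra.
  rewrite S_INR. simpl. pose proof (pos_INR t).
  assert (0 <= (1 - y) ^ t) by (apply pow_le; lra).
  assert ((1 - y) * (1 - INR t * y) <= (1 - y) * (1 - y) ^ t) by (apply Rmult_le_compat_l; lra).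
  nra.
Qed.

Lemma engExplore_b VP v : 0 <= engExplore VP v <= 1.
Proof.
  unfold engExplore. pose proof (exp_pos VP). pose proof (exp_pos v).
  split. apply Rdiv_le_0_compat; lra.
  unfold Rdiv. apply Rmult_le_reg_r with (1 + exp VP + exp v). lra.
  rewrite Rmult_assoc, Rinv_l by lra. lra.
Qed.

Lemma engApp_b VP : 0 <= engApp VP <= 1.
Proof.
  unfold engApp. pose proof (exp_pos VP).
  split. apply Rdiv_le_0_compat; lra.
  unfold Rdiv. apply Rmult_le_reg_r with (1 + 2 * exp VP). lra.
  rewrite Rmult_assoc, Rinv_l by lra. lra.
Qed.

Lemma ln_gt1_pos x : 1 < x -> 0 < ln x.
Proof. intros. rewrite <- ln_1. apply ln_increasing; lra. Qed.

Lemma utilApp_pos VP : 0 < utilApp VP.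
Proof. unfold utilApp. apply ln_gt1_pos. pose proof (exp_pos VP). lra. Qed.
Lemma utilExplore_pos VP v : 0 < utilExplore VP v.
Proof. unfold utilExplore. apply ln_gt1_pos. pose proof (exp_pos VP). pose proof (exp_pos v). lra. Qed.

Lemma p_uEh VP p : 0 < p < 1 ->
  1 - p <= p * utilExplore VP ((1 - p) / p) <= 1 - p + p * (1 + exp VP).
Proof.
  intros Hp. unfold utilExplore. set (x := (1 - p) / p).
  assert (Hx : p * x = 1 - p) by (unfold x; field; lra).
  assert (Hx0 : 0 <= x) by (unfold x; apply Rdiv_le_0_compat; lra).
  set (c := 1 + exp VP). assert (Hc : 1 < c) by (unfold c; pose proof (exp_pos VP); lra).
  pose proof (exp_pos x).
  assert (E1 : 1 <= exp x) by (pose proof (exp_ineq1_le x); lra).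
  assert (L1 : x <= ln (c + exp x)).
  { rewrite <- (ln_exp x) at 1. apply ln_le. apply exp_pos. lra. }
  assert (L2 : ln (c + exp x) <= x + c).
  { apply Rle_trans with (ln ((1 + c) * exp x)). apply ln_le. lra. nra.
    rewrite ln_mult, ln_exp by lra.
    assert (ln (1 + c) <= c).
    { rewrite <- (ln_exp c) at 2. apply ln_le. lra. apply exp_ineq1_le. }
    lra. }
  split; nra.
Qed.

Section M.
Variables delta VP : R.
Hypothesis Hd : 0 <= delta < 1.

Definition eEh p := engExplore VP ((1 - p) / p).
Definition uEh p := utilExplore VP ((1 - p) / p).

Definition aE p t := delta ^ t *
    (p * stepExp VP p ((1 - p) / p) (engExplore VP ((1 - p) / p)) (engApp VP) t
     + (1 - p) * stepExp VP p (-1) (engExplore VP (-1)) (engApp VP) t).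
Definition aU p t := delta ^ t *
    (p * stepExp VP p ((1 - p) / p) (utilExplore VP ((1 - p) / p)) (utilApp VP) t
     + (1 - p) * stepExp VP p (-1) (utilExplore VP (-1)) (utilApp VP) t).

Definition bE t := engApp VP * delta ^ t + (engExplore VP (-1) - engApp VP) * (delta * rho2 VP) ^ t.
Definition bU t := (1 + utilApp VP) * delta ^ t + (utilExplore VP (-1) - utilApp VP) * (delta * rho2 VP) ^ t.

Definition KU := 1 + (1 + exp VP) + 2 * utilApp VP + utilExplore VP (-1).

Lemma dpow_b t : 0 <= delta ^ t <= 1.
Proof. split. apply pow_le; lra. rewrite <- (pow1 t). apply pow_incr; lra. Qed.

Lemma aE_dom p t : 0 < p < 1 -> Rabs (aE p t) <= 1 * delta ^ t.
Proof.
  intros Hp. unfold aE.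
  pose proof (engExplore_b VP ((1 - p) / p)). pose proof (engExplore_b VP (-1)). pose proof (engApp_b VP).
  pose proof (stepExp_bounds VP p ((1 - p) / p) (engExplore VP ((1 - p) / p)) (engApp VP) 1 t ltac:(lra) ltac:(lra)).
  pose proof (stepExp_bounds VP p (-1) (engExplore VP (-1)) (engApp VP) 1 t ltac:(lra) ltac:(lra)).
  pose proof (dpow_b t).
  set (S1 := stepExp VP p ((1 - p) / p) (engExplore VP ((1 - p) / p)) (engApp VP) t) in *.
  set (S2 := stepExp VP p (-1) (engExplore VP (-1)) (engApp VP) t) in *.
  assert (0 <= p * S1 + (1 - p) * S2 <= 1) by (split; nra).
  rewrite Rabs_pos_eq by (apply Rmult_le_pos; lra). nra.
Qed.

Lemma aU_dom p t : 0 < p < 1 -> Rabs (aU p t) <= KU * delta ^ t.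
Proof.
  intros Hp. unfold aU, KU.
  pose proof (utilExplore_pos VP ((1 - p) / p)). pose proof (utilExplore_pos VP (-1)). pose proof (utilApp_pos VP).
  pose proof (p_uEh VP p Hp).
  pose proof (stepExp_bounds VP p ((1 - p) / p) (utilExplore VP ((1 - p) / p)) (utilApp VP)
      (utilExplore VP ((1 - p) / p) + utilApp VP) t ltac:(lra) ltac:(lra)).
  pose proof (stepExp_bounds VP p (-1) (utilExplore VP (-1)) (utilApp VP)
      (utilExplore VP (-1) + utilApp VP) t ltac:(lra) ltac:(lra)).
  pose proof (dpow_b t). pose proof (exp_pos VP).
  set (S1 := stepExp VP p ((1 - p) / p) (utilExplore VP ((1 - p) / p)) (utilApp VP) t) in *.
  set (S2 := stepExp VP p (-1) (utilExplore VP (-1)) (utilApp VP) t) in *.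
  assert (A : p * S1 <= 1 + (1 + exp VP) + utilApp VP) by nra.
  assert (B : (1 - p) * S2 <= utilExplore VP (-1) + utilApp VP) by nra.
  assert (C : 0 <= p * S1 + (1 - p) * S2) by nra.
  rewrite Rabs_pos_eq by (apply Rmult_le_pos; lra).
  assert (p * S1 + (1 - p) * S2 <= 1 + (1 + exp VP) + 2 * utilApp VP + utilExplore VP (-1)) by lra.
  nra.
Qed.

Lemma rw2 t : (delta * rho2 VP) ^ t = delta ^ t * rho2 VP ^ t.
Proof. apply Rpow_mult_distr. Qed.

Lemma bE_dom t : Rabs (bE t) <= 1 * delta ^ t.
Proof.
  unfold bE. rewrite rw2. pose proof (dpow_b t). pose proof rho2_b VP.
  assert (0 <= rho2 VP ^ t <= 1) by (split; [apply pow_le; lra| rewrite <- (pow1 t); apply pow_incr; lra]).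
  pose proof (engExplore_b VP (-1)). pose proof (engApp_b VP).
  replace (engApp VP * delta ^ t + (engExplore VP (-1) - engApp VP) * (delta ^ t * rho2 VP ^ t))
    with (delta ^ t * (rho2 VP ^ t * engExplore VP (-1) + (1 - rho2 VP ^ t) * engApp VP)) by ring.
  rewrite Rabs_pos_eq by (apply Rmult_le_pos; nra). rewrite Rmult_1_l.
  rewrite <- (Rmult_1_r (delta ^ t)) at 2. apply Rmult_le_compat_l; nra.
Qed.

Lemma bU_dom t : Rabs (bU t) <= KU * delta ^ t.
Proof.
  unfold bU, KU. rewrite rw2. pose proof (dpow_b t). pose proof rho2_b VP.
  assert (0 <= rho2 VP ^ t <= 1) by (split; [apply pow_le; lra| rewrite <- (pow1 t); apply pow_incr; lra]).
  pose proof (utilExplore_pos VP (-1)). pose proof (utilApp_pos VP). pose proof (exp_pos VP).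
  replace ((1 + utilApp VP) * delta ^ t + (utilExplore VP (-1) - utilApp VP) * (delta ^ t * rho2 VP ^ t))
    with (delta ^ t * (1 + rho2 VP ^ t * utilExplore VP (-1) + (1 - rho2 VP ^ t) * utilApp VP)) by ring.
  rewrite Rabs_pos_eq by (apply Rmult_le_pos; nra).
  assert (1 + rho2 VP ^ t * utilExplore VP (-1) + (1 - rho2 VP ^ t) * utilApp VP <= 1 + (1 + exp VP) + 2 * utilApp VP + utilExplore VP (-1)) by nra.
  nra.
Qed.

Definition p1 t := Rmin (1/2) (rho2 VP ^ t * (1 - rho2 VP) / (1 + exp VP)).

Lemma p1_pos t : 0 < p1 t.
Proof.
  unfold p1. pose proof rho2_b VP. pose proof (exp_pos VP). apply Rmin_pos. lra.
  apply Rdiv_lt_0_compat; [apply Rmult_lt_0_compat; [apply pow_lt|]|]; lra.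
Qed.

Lemma p1_good t p : 0 < p < p1 t -> 0 < p < 1 /\ (1 + exp VP) * p < rho2 VP ^ t * (1 - rho2 VP).
Proof.
  intros Hp. unfold p1 in Hp. pose proof (Rmin_l (1/2) (rho2 VP ^ t * (1 - rho2 VP) / (1 + exp VP))).
  pose proof (Rmin_r (1/2) (rho2 VP ^ t * (1 - rho2 VP) / (1 + exp VP))).
  pose proof (exp_pos VP). split. lra.
  assert (p < rho2 VP ^ t * (1 - rho2 VP) / (1 + exp VP)) by lra.
  apply Rmult_lt_compat_l with (r := 1 + exp VP) in H2; [|lra].
  replace ((1 + exp VP) * (rho2 VP ^ t * (1 - rho2 VP) / (1 + exp VP))) with (rho2 VP ^ t * (1 - rho2 VP)) in H2 by (field; lra).
  lra.
Qed.

Lemma step_rw p t v gE gA : 0 < p < p1 t ->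
  stepExp VP p v gE gA t = qN VP v ^ t * gE + (1 - qN VP v ^ t) * gA.
Proof.
  intros Hp. destruct (p1_good t p Hp) as [Hp' Hc].
  apply (stepExp_formula VP p v t).
  - apply good0; auto.
  - apply good1; auto.
  - lia.
Qed.

Lemma aE_lim t : exists p0 L, 0 < p0 /\ forall p, 0 < p < p0 -> Rabs (aE p t - bE t) <= L * p.
Proof.
  exists (p1 t), 1. split. apply p1_pos. intros p Hp.
  destruct (p1_good t p Hp) as [Hp' Hc].
  unfold aE, bE. rewrite !step_rw by auto. rewrite <- rho1_eq, <- rho2_eq, rw2.
  pose proof (dpow_b t). pose proof rho2_b VP. pose proof (rho1_b VP p).
  assert (0 <= rho2 VP ^ t <= 1) by (split; [apply pow_le; lra| rewrite <- (pow1 t); apply pow_incr; lra]).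
  assert (0 <= rho1 VP p ^ t <= 1) by (split; [apply pow_le; lra| rewrite <- (pow1 t); apply pow_incr; lra]).
  pose proof (engExplore_b VP (-1)). pose proof (engApp_b VP). pose proof (engExplore_b VP ((1 - p) / p)).
  set (u := rho1 VP p ^ t) in *. set (w := rho2 VP ^ t) in *. set (D := delta ^ t) in *.
  set (Y1 := u * engExplore VP ((1 - p) / p) + (1 - u) * engApp VP).
  set (Y2 := w * engExplore VP (-1) + (1 - w) * engApp VP).
  assert (0 <= Y1 <= 1) by (unfold Y1; split; nra).
  assert (0 <= Y2 <= 1) by (unfold Y2; split; nra).
  match goal with |- Rabs ?X <= _ => replace X with (p * (D * (Y1 - Y2))) by (unfold Y1, Y2; ring) end.
  rewrite Rabs_mult, Rabs_pos_eq by lra. rewrite Rmult_comm. apply Rmult_le_compat_r. lra.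
  rewrite Rabs_mult. rewrite (Rabs_pos_eq D) by lra.
  assert (Rabs (Y1 - Y2) <= 1) by (apply Rabs_le; lra).
  assert (0 <= Rabs (Y1 - Y2)) by apply Rabs_pos. nra.
Qed.

Lemma aU_lim t : exists p0 L, 0 < p0 /\ forall p, 0 < p < p0 -> Rabs (aU p t - bU t) <= L * p.
Proof.
  set (c := 1 + exp VP).
  exists (p1 t), ((1 + c) + INR t * c + 2 * utilApp VP + utilExplore VP (-1)).
  split. apply p1_pos. intros p Hp.
  destruct (p1_good t p Hp) as [Hp' Hc].
  unfold aU, bU. rewrite !step_rw by auto. rewrite <- rho1_eq, <- rho2_eq, rw2.
  pose proof (dpow_b t). pose proof rho2_b VP. pose proof (rho1_b VP p).
  assert (0 <= rho2 VP ^ t <= 1) by (split; [apply pow_le; lra| rewrite <- (pow1 t); apply pow_incr; lra]).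
  assert (0 <= rho1 VP p ^ t <= 1) by (split; [apply pow_le; lra| rewrite <- (pow1 t); apply pow_incr; lra]).
  assert (Hb : 1 - INR t * (c * p) <= rho1 VP p ^ t).
  { pose proof (one_m_rho1 VP p Hp'). fold c in H4.
    pose proof (bernoulli (1 - rho1 VP p) t ltac:(lra)).
    replace (1 - (1 - rho1 VP p)) with (rho1 VP p) in H5 by ring.
    pose proof (pos_INR t).
    assert (INR t * (1 - rho1 VP p) <= INR t * (c * p)) by (apply Rmult_le_compat_l; lra). lra. }
  pose proof (p_uEh VP p Hp'). fold c in H4.
  pose proof (utilExplore_pos VP (-1)). pose proof (utilApp_pos VP).
  assert (Hc1 : 1 < c) by (unfold c; pose proof (exp_pos VP); lra).
  pose proof (pos_INR t).
  set (u := rho1 VP p ^ t) in *. set (w := rho2 VP ^ t) in *. set (D := delta ^ t) in *.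
  set (P := p * utilExplore VP ((1 - p) / p)) in *.
  set (Y2 := w * utilExplore VP (-1) + (1 - w) * utilApp VP).
  assert (0 <= Y2 <= utilExplore VP (-1) + utilApp VP) by (unfold Y2; split; nra).
  set (Z := u * (P - 1) + (u - 1) + p * (1 - u) * utilApp VP - p * Y2).
  match goal with |- Rabs ?X <= _ => replace X with (D * Z) by (unfold Z, Y2, P; ring) end.
  assert (Z1 : u * (P - 1) <= p * c) by nra.
  assert (Z2 : - p <= u * (P - 1)) by nra.
  assert (Z3 : 0 <= p * (1 - u) * utilApp VP <= p * utilApp VP).
  { assert (0 <= p * utilApp VP) by nra.
    replace (p * (1 - u) * utilApp VP) with ((1 - u) * (p * utilApp VP)) by ring. split; nra. }
  assert (Z4 : 0 <= p * Y2 <= p * (utilExplore VP (-1) + utilApp VP)) by (split; nra).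
  assert (Z5 : - (INR t * c * p) <= u - 1 <= 0) by lra.
  assert (HZ : Rabs Z <= (1 + c + INR t * c + 2 * utilApp VP + utilExplore VP (-1)) * p).
  { apply Rabs_le. unfold Z. split; nra. }
  rewrite Rabs_mult, (Rabs_pos_eq D) by lra.
  assert (0 <= Rabs Z) by apply Rabs_pos. nra.
Qed.

Lemma series2 (A B x : R) : 0 <= x <= 1 ->
  Series (fun t => A * delta ^ t + B * (delta * x) ^ t) = A * / (1 - delta) + B * / (1 - delta * x).
Proof.
  intros Hx. assert (0 <= delta * x <= delta) by (split; nra).
  rewrite Series_plus by (apply geom_ex; lra). rewrite !geom_val by lra. reflexivity.
Qed.

End M.


Lemma eng_lt VP : -1 < VP -> engExplore VP (-1) < engApp VP.
Proof.
  intros H. unfold engExplore, engApp.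
  pose proof (exp_increasing _ _ H). pose proof (exp_pos VP). pose proof (exp_pos (-1)).
  set (a := exp VP) in *. set (b := exp (-1)) in *.
  unfold Rdiv. apply Rmult_lt_reg_r with ((1 + a + b) * (1 + 2 * a)). apply Rmult_lt_0_compat; lra.
  replace ((a + b) * / (1 + a + b) * ((1 + a + b) * (1 + 2 * a))) with ((a + b) * (1 + 2 * a)) by (field; lra).
  replace (2 * a * / (1 + 2 * a) * ((1 + a + b) * (1 + 2 * a))) with (2 * a * (1 + a + b)) by (field; lra).
  nra.
Qed.

Lemma util_diff VP : utilApp VP - utilExplore VP (-1) < 1.
Proof.
  unfold utilApp, utilExplore. pose proof (exp_pos VP). pose proof (exp_pos (-1)).
  assert (He : 2 < exp 1) by (pose proof (exp_ineq1 1 ltac:(lra)); lra).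
  assert (ln (1 + 2 * exp VP) < ln (exp 1 * (1 + exp VP + exp (-1)))).
  { apply ln_increasing. lra. nra. }
  rewrite ln_mult, ln_exp in H1 by (try apply exp_pos; lra). lra.
Qed.

Theorem mainTheorem5 (delta VP : R) :
  0 <= delta < 1 -> -1 < VP ->
  EngAPP delta VP = / (1 - delta) * (2 * exp VP / (1 + 2 * exp VP)) /\
  UtilAPP delta VP = / (1 - delta) * ln (1 + 2 * exp VP) /\
  exists LE LU : R,
    filterlim (fun p => EngPEAR delta VP p) (at_right 0) (locally LE) /\
    filterlim (fun p => UtilPEAR delta VP p) (at_right 0) (locally LU) /\
    LE < EngAPP delta VP /\
    LU > UtilAPP delta VP.
Proof.
  intros Hd HVP.
  assert (HE : EngAPP delta VP = / (1 - delta) * (2 * exp VP / (1 + 2 * exp VP))).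
  { unfold EngAPP. rewrite (Series_ext _ (fun t => engApp VP * delta ^ t)) by (intros; ring).
    rewrite geom_val by lra. unfold engApp. ring. }
  assert (HU : UtilAPP delta VP = / (1 - delta) * ln (1 + 2 * exp VP)).
  { unfold UtilAPP. rewrite (Series_ext _ (fun t => utilApp VP * delta ^ t)) by (intros; ring).
    rewrite geom_val by lra. unfold utilApp. ring. }
  split; [exact HE|]. split; [exact HU|].
  exists (Series (bE delta VP)), (Series (bU delta VP)).
  pose proof (rho2_b VP) as Hr.
  split.
  { change (fun p => EngPEAR delta VP p) with (fun p => Series (aE delta VP p)).
    apply (series_lim _ _ 1 delta 1);
      [exact Hd | lra | intros p t Hp; apply aE_dom; auto | intros t; apply bE_dom; auto | intros t; apply aE_lim; auto]. }
  split.
  { change (fun p => UtilPEAR delta VP p) with (fun p => Series (aU delta VP p)).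
    apply (series_lim _ _ (KU VP) delta 1);
      [exact Hd | lra | intros p t Hp; apply aU_dom; auto | intros t; apply bU_dom; auto | intros t; apply aU_lim; auto]. }
  assert (Hx : 0 <= delta * rho2 VP <= delta) by (split; nra).
  assert (Y0 : 0 < / (1 - delta * rho2 VP)) by (apply Rinv_0_lt_compat; lra).
  assert (X0 : 0 < / (1 - delta)) by (apply Rinv_0_lt_compat; lra).
  assert (XY : / (1 - delta * rho2 VP) <= / (1 - delta)) by (apply Rinv_le_contravar; lra).
  split.
  - unfold bE. rewrite series2 by (auto; lra). rewrite HE. fold (engApp VP).
    pose proof (eng_lt VP HVP). nra.
  - unfold bU. rewrite series2 by (auto; lra). rewrite HU. fold (utilApp VP).
    pose proof (util_diff VP). 
    assert (0 < (1 - (utilApp VP - utilExplore VP (-1))) * / (1 - delta * rho2 VP)) by (apply Rmult_lt_0_compat; lra).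
    nra.
Qed.
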